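(* Let $G=(V,E)$ be a connected graph and $d\ge 1$ an integer, and let $G^{(d)}$ be the graph obtained from $G$ by replacing each edge $xy\in E$ by a path of length $d$ connecting $x$ and $y$ (i.e., subdividing each edge by $d-1$ new vertices). Then $$\textrm{cn}(G) \le \textrm{cn}(G^{(d)}) \le \textrm{cn}(G)+1.$$
   Context: Game of cops and robber on a finite graph: $k$ cops are placed on vertices (possibly several on one vertex), then the robber is placed; players alternate starting with the cops; in a move each cop and, on his turn, the robber stays or moves to an adjacent vertex. The robber is captured when a cop occupies his vertex. $\textrm{cn}(G)$ is the least $k$ such that $k$ cops have a strategy guaranteeing capture. *)

(* Defs.v *)
From mathcomp Require Import all_boot.
From mathcomp Require Import boolp.
Set Implicit Arguments. Unset Strict Implicit. Unset Printing Implicit Defensive.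

Definition simple_graph (V : finType) (e : rel V) :=
  symmetric e /\ irreflexive e.
Definition connected_graph (V : finType) (e : rel V) :=
  forall x y : V, connect e x y.

Section CopsRobber.
Variables (V : finType) (e : rel V).

Definition step (x y : V) : bool := (x == y) || e x y.

Definition cops_move (k : nat) (c c' : {ffun 'I_k -> V}) : Prop :=
  forall i, step (c i) (c' i).

Definition captured (k : nat) (c : {ffun 'I_k -> V}) (r : V) : Prop :=
  exists i, c i = r.

Inductive cw (k : nat) : {ffun 'I_k -> V} -> V -> Prop :=
| cw_cap c r : captured c r -> cw c r
| cw_step c r c' : cops_move c c' ->
    (captured c' r \/ (forall r', step r r' -> cw c' r')) -> cw c r.

(* k cops have a winning strategy: they choose initial positions, then the
   robber chooses his, then the cops move first. *)
Definition cop_win (k : nat) : Prop :=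
  exists c0 : {ffun 'I_k -> V}, forall r0 : V, cw c0 r0.

(* cop number: least k such that k cops win. Since #|V| cops always win
   (one per vertex), the least such k lies in [0, #|V|], so searching
   iota 0 #|V|.+1 gives the minimum. *)
Definition cop_number : nat :=
  find (fun k => `[< cop_win k >]) (iota 0 #|V|.+1).

End CopsRobber.

(* Vertices: original vertices (inl x), and interior vertices inr (x,y,i)
   with e x y, x before y in enum order (one orientation per edge),
   and 0 < i < d (position i along the path from x to y). *)
Section Subdivision.
Variables (T : finType) (e : rel T) (d : nat).

Definition svalid (v : T + (T * T * 'I_d)) : bool :=
  match v with
  | inl _ => true
  | inr (x, y, i) => [&& e x y, (enum_rank x < enum_rank y)%N & (0 < i)%N]
  end.

Definition subdiv_vert := {v : T + (T * T * 'I_d) | svalid v}.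

Definition sadj0 (u v : T + (T * T * 'I_d)) : bool :=
  match u, v with
  | inl x, inl y => (d == 1) && e x y
  | inl x, inr (a, b, i) => ((x == a) && (i == 1 :> nat)) || ((x == b) && (i == d.-1 :> nat))
  | inr (a, b, i), inr (a', b', j) => [&& a == a', b == b' & (i.+1 == j :> nat)]
  | inr _, inl _ => false
  end.

Definition subdiv_rel : rel subdiv_vert :=
  fun u v => sadj0 (val u) (val v) || sadj0 (val v) (val u).

End Subdivision.

(* Main.v *)
Require Import Defs.
From mathcomp Require Import all_boot.
From mathcomp Require Import boolp.
From mathcomp Require Import zify.
Set Implicit Arguments. Unset Strict Implicit. Unset Printing Implicit Defensive.

Section CN.
Variables (V : finType) (e : rel V).

Lemma cop_win_card : cop_win e #|V|.
Proof.
exists [ffun i => enum_val i] => r0; apply: cw_cap.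
by exists (enum_rank r0); rewrite ffunE enum_rankK.
Qed.

Lemma cn_le k : cop_win e k -> k <= #|V| -> cop_number e <= k.
Proof.
move=> Hk Hle; rewrite /cop_number.
set s := iota 0 #|V|.+1.
case: (ltnP k (find (fun k => `[< cop_win e k >]) s)) => // Hlt.
have := before_find 0 Hlt; rewrite nth_iota ?add0n //.
by move/asboolP.
Qed.

Lemma cn_card : cop_number e <= #|V|.
Proof. exact: cn_le cop_win_card _. Qed.

Lemma cn_win : cop_win e (cop_number e).
Proof.
rewrite /cop_number; set s := iota 0 #|V|.+1.
have Hh : has (fun k => `[< cop_win e k >]) s.
  apply/hasP; exists #|V|.
    by rewrite /s mem_iota add0n ltnSn.
  apply/asboolP. exact: cop_win_card.
have Hlt : find (fun k => `[< cop_win e k >]) s < #|V|.+1.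
  by move: Hh; rewrite has_find /s size_iota.
have := nth_find 0 Hh; rewrite nth_iota // add0n.
by move/asboolP.
Qed.
End CN.

Section CwInd.
Variables (V : finType) (e : rel V) (k : nat).
Variable P : {ffun 'I_k -> V} -> V -> Prop.
Hypothesis Hcap : forall c r, captured c r -> P c r.
Hypothesis Hstep : forall c r c', cops_move e c c' ->
  captured c' r \/ (forall r', step e r r' -> cw e c' r' /\ P c' r') -> P c r.

Fixpoint cw_ind2 c r (H : cw e c r) {struct H} : P c r :=
  match H with
  | cw_cap c r Hc => Hcap Hc
  | cw_step c r c' Hm Hor =>
    Hstep Hm (match Hor with
              | or_introl h => or_introl h
              | or_intror h => or_intror (fun r' Hr' => conj (h r' Hr') (cw_ind2 (h r' Hr')))
              end)
  end.
End CwInd.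


Section Dist.
Variables (V : finType) (E : rel V).
Hypothesis conn : forall x y : V, connect E x y.

Fixpoint reachn (n : nat) (x y : V) : bool :=
  if n is n'.+1 then [exists z, step E x z && reachn n' z y] else x == y.

Lemma reachn_front n x z y : step E x z -> reachn n z y -> reachn n.+1 x y.
Proof. by move=> H1 H2 /=; apply/existsP; exists z; rewrite H1. Qed.

Lemma reachn_back n x y y' : reachn n x y -> step E y y' -> reachn n.+1 x y'.
Proof.
elim: n x => [|n IH] x /=.
  move/eqP=> -> H; apply/existsP; exists y'; by rewrite H /=.
case/existsP=> z /andP [Hxz Hz] H; apply/existsP; exists z; rewrite Hxz /=.
exact: IH.
Qed.

Lemma reach_ex x y : exists n, reachn n x y.
Proof.
have /connectP [p Hp ->] := conn x y.
exists (size p); elim: p x Hp => [|z p IH] x /=; first by [].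
case/andP=> Hxz Hp; apply: (reachn_front (z:=z)); first by rewrite /step Hxz orbT.
exact: IH.
Qed.

Definition dist x y := ex_minn (reach_ex x y).

Lemma dist_reach x y : reachn (dist x y) x y.
Proof. by rewrite /dist; case: ex_minnP. Qed.

Lemma dist_min n x y : reachn n x y -> dist x y <= n.
Proof. by rewrite /dist; case: ex_minnP => m _ H /H. Qed.

Lemma dist0 x : dist x x = 0.
Proof. by apply/eqP; rewrite -leqn0; apply: dist_min => /=. Qed.

Lemma dist0_eq x y : dist x y = 0 -> x = y.
Proof. by move=> H; have := dist_reach x y; rewrite H => /eqP. Qed.

Lemma dist_back x y y' : step E y y' -> dist x y' <= (dist x y).+1.
Proof. by move=> H; apply: dist_min; apply: reachn_back (dist_reach _ _) H. Qed.

Lemma dist_front x x' y : step E x x' -> dist x y <= (dist x' y).+1.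
Proof. by move=> H; apply: dist_min; apply: reachn_front H (dist_reach _ _). Qed.

Lemma dist_geo x y : exists x', step E x x' /\ dist x' y = (dist x y).-1.
Proof.
case Hd: (dist x y) => [|n].
  by exists x; split; [rewrite /step eqxx | rewrite (dist0_eq Hd) dist0].
have := dist_reach x y; rewrite Hd /= => /existsP [z /andP [Hxz Hz]].
exists z; split => //; apply/eqP; rewrite eqn_leq dist_min //=.
by have := dist_front y Hxz; rewrite Hd ltnS.
Qed.

Definition Phi x r q := 2 * dist x r + (dist x r != (dist x q).+1).

Lemma chaser x r q : step E q r -> x != r ->
  exists x', step E x x' /\ dist x' r = (dist x r).-1 /\
    (dist x r == (dist x q).+1 -> x != q -> dist x' q = (dist x q).-1).
Proof.
move=> Hqr Hxr.
have Hpos : 0 < dist x r.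
  by rewrite lt0n; apply/negP => /eqP /dist0_eq /eqP; rewrite (negPf Hxr).
case A: ((dist x r == (dist x q).+1) && (x != q)).
  case/andP: A => A Hxq.
  have Hq : 0 < dist x q.
    by rewrite lt0n; apply/negP => /eqP /dist0_eq /eqP; rewrite (negPf Hxq).
  have [x' [Hx' Hd']] := dist_geo x q.
  exists x'; split => //; split => //.
  have H1 := dist_back x' Hqr.
  have H2 := dist_front r Hx'.
  move/eqP: A => A; apply/eqP; rewrite eqn_leq; apply/andP; split; lia.
have [x' [Hx' Hd']] := dist_geo x r.
by exists x'; split => //; split => // A1 A2; move: A; rewrite A1 A2.
Qed.

Lemma Phi_dec x x' r q r' :
  dist x' r = (dist x r).-1 -> 0 < dist x' r ->
  (dist x r == (dist x q).+1 -> x != q -> dist x' q = (dist x q).-1) ->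
  step E r r' ->
  Phi x' r' r <= Phi x r q /\ (r' = r \/ r' = q -> Phi x' r' r < Phi x r q).
Proof.
move=> H1 H2 H3 Hr.
have H4 := dist_back x' Hr.
rewrite /Phi.
case A: (dist x r == (dist x q).+1); move: A => /eqP A.
  have Hxq : x != q.
    by apply/negP => /eqP Hq; subst q; move: A; rewrite dist0; lia.
  have H5 := H3 (introT eqP A) Hxq.
  case B: (dist x' r' == (dist x' r).+1); move: B => /eqP B /=.
    split; first lia.
    case=> Hr'; subst r'; [lia|]. lia.
  split; first lia.
  case=> Hr'; subst r'; lia.
case B: (dist x' r' == (dist x' r).+1); move: B => /eqP B /=; split; try lia;
  case=> Hr'; subst r'; lia.
Qed.

End Dist.


Section Subd.
Variables (T : finType) (e : rel T) (d' : nat).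
Hypotheses (esym : symmetric e) (eirr : irreflexive e).
Local Notation d := d'.+1.
Local Notation W := (T + (T * T * 'I_d))%type.
Local Notation V := (subdiv_vert e d).
Local Notation E := (@subdiv_rel T e d).

Definition rk (x : T) : nat := enum_rank x.

Lemma rk_inj x y : rk x = rk y -> x = y.
Proof. by move=> H; apply: enum_rank_inj; apply: val_inj. Qed.

Definition vinl (x : T) : V := exist _ (inl x) isT.

Definition rpos (x y : T) (m : nat) : W :=
  if x == y then inl x else if m == 0 then inl x else if d <= m then inl y
  else if rk x < rk y then inr (x, y, inord m) else inr (y, x, inord (d - m)).

Lemma eneq x y : e x y -> x != y.
Proof. by move=> H; apply/negP => /eqP Hxy; subst y; rewrite eirr in H. Qed.

Lemma rk_neq x y : x != y -> rk x < rk y = false -> rk y < rk x.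
Proof.
move=> Hxy Hlt; have : rk x != rk y by apply/negP => /eqP /rk_inj /eqP; rewrite (negPf Hxy).
move: Hlt; lia.
Qed.

Lemma rpos_valid x y m : step e x y -> svalid e (rpos x y m).
Proof.
rewrite /step /rpos; case: eqP => [//|Hxy] /= Hexy.
case: eqP => // Hm; case: leqP => // Hmd.
case: ifP => Hr /=.
  rewrite /= Hexy Hr /= inordK; lia.
rewrite (esym y x) Hexy (rk_neq (introN eqP Hxy) Hr) /= inordK; lia.
Qed.

Definition pos x y m : V := insubd (vinl x) (rpos x y m).

Lemma pos_val x y m : step e x y -> val (pos x y m) = rpos x y m.
Proof. by move=> H; rewrite /pos insubdK //; exact: rpos_valid. Qed.


Lemma rpos_same x m : rpos x x m = inl x.
Proof. by rewrite /rpos eqxx. Qed.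

Lemma rpos_int x y m : x != y -> 0 < m < d ->
  rpos x y m = if rk x < rk y then inr (x, y, inord m) else inr (y, x, inord (d - m)).
Proof.
move=> Hxy /andP [H0 Hd]; rewrite /rpos (negPf Hxy).
have -> : (m == 0) = false by lia.
by have -> : (d <= m) = false by lia.
Qed.

Lemma rpos0 x y : rpos x y 0 = inl x.
Proof. by rewrite /rpos; case: eqP. Qed.

Lemma rposd x y m : d <= m -> rpos x y m = inl y.
Proof.
move=> Hm; rewrite /rpos; case: eqP => [->//|_].
have -> : (m == 0) = false by lia.
by rewrite Hm.
Qed.

Lemma rpos_sym x y m : m <= d -> rpos x y m = rpos y x (d - m).
Proof.
move=> Hm; case: (eqVneq x y) => [->|Hxy]; first by rewrite !rpos_same.
case: (posnP m) => [->|Hm0]; first by rewrite subn0 rpos0 rposd.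
case: (ltnP m d) => Hmd; last first.
  have -> : m = d by lia.
  by rewrite subnn rpos0 rposd.
rewrite rpos_int // ?Hm0 ?Hmd // rpos_int ?(eq_sym y) //; last by lia.
case: ifP => H1; case: ifP => H2.
- by move: H1 H2; lia.
- by have -> : d - (d - m) = m by lia.
- by [].
- have := rk_neq Hxy H1; lia.
Qed.

Lemma raw_nbr a b (i : 'I_d) (w : W) : e a b -> 0 < i -> svalid e w ->
  sadj0 e (inr (a, b, i)) w || sadj0 e w (inr (a, b, i)) ->
  w = rpos a b i.-1 \/ w = rpos a b i.+1.
Proof.
move=> Hab Hi; have Hne := eneq Hab.
case: w => [z | [[a' b'] j]] /=.
  move=> _; case/orP => [/andP [/eqP -> /eqP Hi1]|/andP [/eqP -> /eqP Hi1]].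
    by left; rewrite Hi1 rpos0.
  by right; rewrite rposd //; lia.
case/and3P => Hv1 Hv2 Hj.
case/orP => /and3P [/eqP Ha /eqP Hb /eqP Hij]; subst a' b'.
  right; rewrite rpos_int //; last by have := ltn_ord j; lia.
  rewrite (_ : rk a < rk b = true) //; congr inr; congr pair.
  by apply: val_inj => /=; rewrite inordK //; have := ltn_ord j; lia.
left; rewrite rpos_int //; last by have := ltn_ord i; lia.
rewrite (_ : rk a < rk b = true) //; congr inr; congr pair.
by apply: val_inj => /=; rewrite inordK //; have := ltn_ord i; lia.
Qed.


Lemma pos_same x m : pos x x m = vinl x.
Proof. by apply: val_inj; rewrite pos_val ?rpos_same // /step eqxx. Qed.

Lemma pos0 x y : step e x y -> pos x y 0 = vinl x.
Proof. by move=> H; apply: val_inj; rewrite pos_val // rpos0. Qed.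

Lemma posd x y m : step e x y -> d <= m -> pos x y m = vinl y.
Proof. by move=> H Hm; apply: val_inj; rewrite pos_val // rposd. Qed.

Lemma step_sym x y : step e x y -> step e y x.
Proof. by rewrite /step eq_sym esym. Qed.

Lemma pos_sym x y m : step e x y -> m <= d -> pos x y m = pos y x (d - m).
Proof.
move=> H Hm; apply: val_inj; rewrite pos_val // pos_val ?(rpos_sym _ _ Hm) //; exact: step_sym.
Qed.

Lemma Esym : symmetric E.
Proof. by move=> u v; rewrite /subdiv_rel orbC. Qed.

Lemma pos_nbr a b m v : e a b -> 0 < m < d -> E (pos a b m) v ->
  v = pos a b m.-1 \/ v = pos a b m.+1.
Proof.
move=> Hab Hm; have Hs : step e a b by rewrite /step Hab orbT.
have Hvv := valP v.
rewrite /subdiv_rel pos_val // rpos_int ?eneq //.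
case: ifP => Hr Hadj.
  have Hi : 0 < (inord m : 'I_d) by rewrite inordK; lia.
  have := raw_nbr Hab Hi Hvv Hadj.
  rewrite inordK; last by lia.
  by case=> Hv; [left|right]; apply: val_inj; rewrite pos_val.
have Hba : e b a by rewrite esym.
have Hi : 0 < (inord (d - m) : 'I_d) by rewrite inordK; lia.
have := raw_nbr Hba Hi Hvv Hadj; rewrite inordK; last by lia.
case=> Hv; [right|left]; apply: val_inj; rewrite pos_val // Hv.
  rewrite (@rpos_sym b a ((d - m).-1)); last by lia.
  by have -> : d - (d - m).-1 = m.+1 by lia.
rewrite (@rpos_sym b a ((d - m).+1)); last by lia.
by have -> : d - (d - m).+1 = m.-1 by lia.
Qed.

Lemma inl_nbr x w : E (vinl x) w -> exists z, e x z /\ w = pos x z 1.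
Proof.
rewrite /subdiv_rel /=.
case: w => [[z | [[a b] i]] Hw] /=.
  rewrite (esym z x) orbb => /andP [/eqP Hd1 Hxz]; exists z; split => //.
  apply: val_inj; rewrite pos_val /=; last by rewrite /step Hxz orbT.
  by rewrite rposd // Hd1.
rewrite orbF; have /and3P [Hab Hr Hi] := Hw.
case/orP => /andP [/eqP Hx /eqP Hi1]; subst x.
  exists b; split => //; apply: val_inj; rewrite pos_val /=; last by rewrite /step Hab orbT.
  rewrite rpos_int; first last.
  - by have := ltn_ord i; lia.
  - exact: eneq.
  rewrite (_ : rk a < rk b = true) //.
  by congr inr; congr pair; apply: val_inj; rewrite /= inordK // -Hi1.
exists a; split; first by rewrite esym.
apply: val_inj; rewrite pos_val /=; last by rewrite /step esym Hab orbT.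
rewrite rpos_int; first last.
- by have := ltn_ord i; lia.
- by rewrite eq_sym eneq.
have -> : rk b < rk a = false by move: Hr; rewrite /rk; lia.
congr inr; congr pair; apply: val_inj; rewrite /= inordK; last by lia.
move/eqP: Hi1; lia.
Qed.

Lemma pos_step x y m : step e x y -> m < d -> step E (pos x y m) (pos x y m.+1).
Proof.
move=> Hs Hm; case: (eqVneq x y) => [<-|Hxy]; first by rewrite !pos_same /step eqxx.
have Hxy' : e x y by move: Hs; rewrite /step (negPf Hxy).
rewrite /step; apply/orP; right; rewrite /subdiv_rel !pos_val //.
case: (posnP m) => [->|Hm0].
  rewrite rpos0; case: (leqP d 1) => Hd1.
    by rewrite rposd //= Hxy' andbT; apply/eqP; lia.
  rewrite rpos_int //; case Hr: (rk x < rk y) => /=.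
    by rewrite inordK // !eqxx.
  by rewrite inordK ?eqxx ?subn1 ?eqxx ?orbT //; lia.
rewrite (rpos_int Hxy (_ : 0 < m < d)); last by lia.
case: (ltnP m.+1 d) => Hmd.
  rewrite (rpos_int Hxy (_ : 0 < m.+1 < d)); last by lia.
  case Hr: (rk x < rk y) => /=.
    by rewrite !inordK // !eqxx.
  by rewrite !inordK ?eqxx /=; try lia; apply/orP; right; apply/eqP; lia.
rewrite (rposd x y Hmd); case Hr: (rk x < rk y) => /=.
  by rewrite inordK ?eqxx ?orbT //; lia.
by rewrite inordK ?eqxx ?orbT //; lia.
Qed.

Lemma vert_cases v : (exists x, v = vinl x) \/
  (exists a b m, e a b /\ 0 < m < d /\ v = pos a b m).
Proof.
case: v => [[x|[[a b] i]] Hv]; first by left; exists x; apply: val_inj.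
right; have /and3P [Hab Hr Hi] := Hv.
have Hid : 0 < i < d by rewrite Hi ltn_ord.
exists a, b, i; split => //; split => //; apply: val_inj.
rewrite pos_val /=; last by rewrite /step Hab orbT.
rewrite rpos_int ?eneq // (_ : rk a < rk b = true) //.
by congr inr; congr pair; apply: val_inj; rewrite /= inordK.
Qed.

Lemma edge u v : step E u v -> u != v ->
  exists a b m, e a b /\ 0 < m <= d /\ u = pos a b m.-1 /\ v = pos a b m.
Proof.
rewrite /step => /orP [/eqP -> |Huv]; first by rewrite eqxx.
move=> _; case: (vert_cases u) => [[x Hx]|[a [b [m [Hab [Hm Hu]]]]]].
  subst u; have [z [Hxz Hv]] := inl_nbr Huv.
  exists x, z, 1; split => //; split => //; split => //.
  by rewrite pos0 // /step Hxz orbT.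
have Hs : step e a b by rewrite /step Hab orbT.
subst u; case: (pos_nbr Hab Hm Huv) => Hv.
  exists b, a, (d - m).+1; split; first by rewrite esym.
  split; first by lia.
  split; last by rewrite Hv pos_sym //; [congr pos; lia | lia].
  by rewrite /= pos_sym //; lia.
exists a, b, m.+1; split => //; split => //; lia.
Qed.

Lemma step_connect u v : step E u v -> connect E u v.
Proof. by rewrite /step => /orP [/eqP ->|H]; [exact: connect0 | exact: connect1]. Qed.

Lemma conn_pos x y m : step e x y -> m <= d -> connect E (vinl x) (pos x y m).
Proof.
move=> Hs; elim: m => [|m IH] Hm; first by rewrite pos0 //; apply: connect0.
apply: connect_trans (IH (ltnW Hm)) _; apply: step_connect; exact: pos_step.
Qed.

Lemma conn_inl x y : connect e x y -> connect E (vinl x) (vinl y).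
Proof.
case/connectP => p Hp ->; elim: p x Hp => [|z p IH] x /=; first by move=> _; exact: connect0.
case/andP => Hxz Hp; have Hs : step e x z by rewrite /step Hxz orbT.
apply: connect_trans (IH _ Hp); rewrite -(posd Hs (leqnn d)).
exact: conn_pos.
Qed.

Lemma conn_sub : (forall x y, connect e x y) -> forall u v, connect E u v.
Proof.
move=> Gc.
have H1 : forall u, exists x, connect E (vinl x) u.
  move=> u; case: (vert_cases u) => [[x ->]|[a [b [m [Hab [Hm ->]]]]]].
    by exists x; exact: connect0.
  by exists a; apply: conn_pos; [rewrite /step Hab orbT | lia].
have Hsym := sym_connect_sym Esym.
move=> u v; have [x Hx] := H1 u; have [y Hy] := H1 v.
rewrite Hsym in Hx.
exact: connect_trans Hx (connect_trans (conn_inl (Gc x y)) Hy).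
Qed.

End Subd.

Section LB.
Variables (T : finType) (e : rel T) (d' : nat).
Hypotheses (esym : symmetric e) (eirr : irreflexive e).
Local Notation d := d'.+1.
Local Notation W := (T + (T * T * 'I_d))%type.
Local Notation V := (subdiv_vert e d).
Local Notation E := (@subdiv_rel T e d).
Local Notation vinl := (vinl e d').
Local Notation pos := (pos e d').

Definition hh (c v : T) (t : nat) : nat :=
  if v == c then t else if e c v then d + t else 2 * d.

Definition Dr (c : T) (w : W) : nat :=
  match w with
  | inl x => hh c x 0
  | inr (a, b, i) => minn (hh c a i) (hh c b (d - i))
  end.

Definition DD (c : T) (p : V) : nat := Dr c (val p).

Lemma hh_lip c v t t' : t <= t'.+1 -> hh c v t <= (hh c v t').+1.
Proof. by rewrite /hh; case: eqP; case: (e c v); lia. Qed.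

Lemma hh_le c v t : t <= d -> hh c v t <= 2 * d.
Proof. by rewrite /hh; case: eqP; case: (e c v); lia. Qed.

Lemma hh_cross c a b : e a b -> hh c a 0 <= (hh c b d').+1.
Proof.
move=> Hab; rewrite /hh; case: (eqVneq b c) => [Hb|Hb].
  subst c; rewrite esym Hab; case: eqP => [Ha|_]; last lia.
  by subst a; rewrite eirr in Hab.
case: eqP => _; case: (e c b); case: (e c a); lia.
Qed.

Lemma D_adj c u v : svalid e u -> svalid e v -> sadj0 e u v ->
  Dr c v <= (Dr c u).+1 /\ Dr c u <= (Dr c v).+1.
Proof.
case: u => [x|[[a b] i]]; case: v => [y|[[a' b'] j]] /=.
- move=> _ _ /andP [/eqP Hd1 Hxy]; rewrite /hh.
  case: (eqVneq x c) => Hx; case: (eqVneq y c) => Hy; subst.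
  + by rewrite eirr in Hxy.
  + by rewrite Hxy; case: (e c y); lia.
  + by rewrite -esym Hxy; case: (e c x); lia.
  + by case: (e c x); case: (e c y); lia.
- move=> _ /and3P [Hab _ _] /orP [/andP [/eqP Hx /eqP Hj]|/andP [/eqP Hx /eqP Hj]];
    subst x; rewrite Hj.
  + have H1 : hh c a' 1 <= (hh c a' 0).+1 by apply: hh_lip.
    have H2 : hh c a' 0 <= (hh c a' 1).+1 by apply: hh_lip.
    have H3 := hh_cross c Hab.
    have -> : d - 1 = d' by lia.
    split; lia.
  + have H1 : hh c b' 1 <= (hh c b' 0).+1 by apply: hh_lip.
    have H2 : hh c b' 0 <= (hh c b' 1).+1 by apply: hh_lip.
    have Hba : e b' a' by rewrite esym.
    have H3 := hh_cross c Hba.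
    have -> : d - d' = 1 by lia.
    split; lia.
- by [].
- move=> /and3P [_ _ Hi] /and3P [_ _ Hj] /and3P [/eqP Ha /eqP Hb /eqP Hij]; subst a' b'.
  have := ltn_ord i; have := ltn_ord j => Hjd Hid.
  have H1 : hh c a i <= (hh c a j).+1 by apply: hh_lip; lia.
  have H2 : hh c a j <= (hh c a i).+1 by apply: hh_lip; lia.
  have H3 : hh c b (d - i) <= (hh c b (d - j)).+1 by apply: hh_lip; lia.
  have H4 : hh c b (d - j) <= (hh c b (d - i)).+1 by apply: hh_lip; lia.
  split; lia.
Qed.

Lemma D_step c p p' : step E p p' -> DD c p' <= (DD c p).+1.
Proof.
rewrite /step => /orP [/eqP ->|]; first by lia.
rewrite /subdiv_rel => /orP H; have Hp := valP p; have Hp' := valP p'.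
rewrite /DD; case: H => H.
  by case: (D_adj c Hp Hp' H).
by case: (D_adj c Hp' Hp H).
Qed.


Lemma LB1 p : exists c, 2 * DD c p <= d.
Proof.
case: p => [[x|[[a b] i]] Hv]; rewrite /DD /=.
  by exists x; rewrite /hh eqxx.
case: (leqP (2 * i) d) => Hi.
  by exists a; rewrite /hh eqxx /minn; case: ifP; lia.
by exists b; rewrite /hh eqxx /minn; case: ifP; lia.
Qed.

Lemma LB2 c p : 2 * DD c p <= 3 * d -> exists c', step e c c' /\ 2 * DD c' p <= d.
Proof.
case: p => [[x|[[a b] i]] Hv]; rewrite /DD /= /hh.
  move=> H; exists x; split; last by rewrite eqxx.
  rewrite /step; case: (eqVneq c x) => [//|Hcx] /=.
  by move: H; rewrite eq_sym (negPf Hcx); case: (e c x) => //; lia.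
have /and3P [Hab _ _] := Hv.
have Hid := ltn_ord i.
have Ga : step e c a -> 2 * i <= d -> exists c', step e c c' /\ 2 * Dr c' (inr (a, b, i)) <= d.
  by move=> H1 H2; exists a; split => //; rewrite /= /hh eqxx /minn; case: ifP; lia.
have Gb : step e c b -> 2 * (d - i) <= d -> exists c', step e c c' /\ 2 * Dr c' (inr (a, b, i)) <= d.
  by move=> H1 H2; exists b; split => //; rewrite /= /hh eqxx /minn; case: ifP; lia.
move=> H; rewrite -/(Dr _ _) in Ga Gb.
case: (leqP (2 * i) d) => Hi.
  case Sa: (step e c a); first exact: Ga.
  move: Sa; rewrite /step; case: (eqVneq c a) => //= Hca Hea.
  case: (eqVneq b c) => Hbc.
    by subst c; move: Hea; rewrite esym Hab.
  apply: Gb; last by move: H; rewrite (negPf Hbc) eq_sym (negPf Hca) Hea; case: (e c b); lia.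
  by rewrite /step; move: H; rewrite (negPf Hbc) eq_sym (negPf Hca) Hea; case: (e c b) => //; lia.
case Sb: (step e c b); first by apply: Gb => //; lia.
move: Sb; rewrite /step; case: (eqVneq c b) => //= Hcb Heb.
case: (eqVneq a c) => Hac.
  by subst c; move: Heb; rewrite Hab.
exfalso; move: H; rewrite (negPf Hac) eq_sym (negPf Hcb) Heb; case: (e c a); lia.
Qed.

Lemma DD_vinl c x : DD c (vinl x) = hh c x 0.
Proof. by []. Qed.

Lemma DD_path c u u' m : step e u u' -> m <= d ->
  DD c (pos u u' d) <= DD c (pos u u' m) + (d - m).
Proof.
move=> Hs; move Hk: (d - m) => k; elim: k m Hk => [|k IH] m Hk Hm.
  have -> : m = d by lia.
  by rewrite addn0.
have H1 := IH m.+1 ltac:(lia) ltac:(lia).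
have H2 := D_step c (pos_step esym Hs (_ : m < d)).
have := H2 ltac:(lia); lia.
Qed.

Lemma LBcap c u u' m : step e u u' -> m <= d ->
  2 * DD c (pos u u' m) <= d + 2 * m -> step e c u'.
Proof.
move=> Hs Hm H.
have := DD_path c Hs Hm; rewrite (posd esym Hs (leqnn _)) DD_vinl /hh /step.
case: eqP => [->|_] ; first by rewrite eqxx.
by case: (e c u') => H2; [rewrite orbT | exfalso; lia].
Qed.


Lemma aux0 a b c : 2 * a <= b + 2 * c -> 2 * a <= b + 2 * c.+1.
Proof. lia. Qed.
Lemma aux1 a b c : 2 * a <= b + 2 * c -> 2 * a.+1 <= b + 2 * c.+1.
Proof. lia. Qed.
Lemma aux2 a b c : c <= b -> 2 * a <= b + 2 * c -> 2 * a <= 3 * b.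
Proof. lia. Qed.

Lemma cap_move k (cG : {ffun 'I_k -> T}) i u' : step e (cG i) u' ->
  cw e cG u'.
Proof.
move=> Hs; apply: (@cw_step _ _ _ _ _ [ffun i' => if i' == i then u' else cG i']).
  by move=> i'; rewrite ffunE; case: eqP => [->//|_]; rewrite /step eqxx.
by left; exists i; rewrite ffunE eqxx.
Qed.

Lemma LBwin k (cd : {ffun 'I_k -> V}) r : cw E cd r ->
  forall j u u' (cG : {ffun 'I_k -> T}), step e u u' -> j < d ->
  r = pos u u' j.+1 -> (forall i, 2 * DD (cG i) (cd i) <= d + 2 * j) ->
  cw e cG u'.
Proof.
move=> H; elim/cw_ind2: H => {cd r}.
  move=> cd r [i Hi] j u u' cG Hs Hj Hr Hinv.
  apply: (@cap_move _ _ i); apply: (LBcap (m := j.+1) Hs) => //.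
  by rewrite -Hr -Hi; apply: aux0 (Hinv i).
move=> cd r cd' Hm Hor j u u' cG Hs Hj Hr Hinv.
have Hinv' : forall i, 2 * DD (cG i) (cd' i) <= d + 2 * j.+1.
  move=> i; apply: leq_trans (_ : 2 * (DD (cG i) (cd i)).+1 <= _).
    by rewrite leq_mul2l D_step.
  exact: aux1 (Hinv i).
case: Hor => [[i Hi]|Hall].
  apply: (@cap_move _ _ i); apply: (LBcap (m := j.+1) Hs) => //.
  by rewrite -Hr -Hi; apply: (Hinv' i).
case: (ltnP j.+1 d) => Hjd.
  have Hst : step E r (pos u u' j.+2) by rewrite Hr; exact: pos_step.
  have [_ IH] := Hall _ Hst.
  exact: IH Hs Hjd erefl Hinv'.
have Hch : forall i, exists c', step e (cG i) c' && (2 * DD c' (cd' i) <= d).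
  move=> i; have Hjd' : j.+1 <= d by lia.
  have [c' [H1 H2]] := LB2 (aux2 Hjd' (Hinv' i)).
  by exists c'; rewrite H1 H2.
pose cG' := [ffun i => xchoose (Hch i)].
apply: (@cw_step _ _ _ _ _ cG').
  by move=> i; rewrite ffunE; case/andP: (xchooseP (Hch i)).
right => u'' Hu''.
have Hrd : r = vinl u' by rewrite Hr posd //; lia.
have Hst : step E r (pos u' u'' 1) by rewrite Hrd -(pos0 d' esym Hu''); exact: pos_step.
have [_ IH] := Hall _ Hst.
apply: (IH 0 u' u'' cG' Hu'') => //.
by move=> i; rewrite ffunE; case/andP: (xchooseP (Hch i)) => _ H; rewrite addn0.
Qed.

Lemma LB_win k : cop_win E k -> cop_win e k.
Proof.
case=> cd0 Hcd0.
have Hch : forall i, exists c, 2 * DD c (cd0 i) <= d by move=> i; exact: LB1.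
exists [ffun i => xchoose (Hch i)] => r0.
apply: (LBwin (Hcd0 (vinl r0)) (j := 0) (u := r0)) => //.
- by rewrite /step eqxx.
- by rewrite (pos_same d' esym).
- by move=> i; rewrite ffunE addn0; exact: xchooseP (Hch i).
Qed.

End LB.


Section UB.
Variables (T : finType) (e : rel T) (d' : nat).
Hypotheses (esym : symmetric e) (eirr : irreflexive e).
Hypothesis Gconn : forall x y, connect e x y.
Local Notation d := d'.+1.
Local Notation V := (subdiv_vert e d).
Local Notation E := (@subdiv_rel T e d).
Local Notation vinl := (vinl e d').
Local Notation pos := (pos e d').

Let Econn : forall u v : V, connect E u v := conn_sub esym eirr Gconn.
Local Notation dist := (dist Econn).
Local Notation Phi := (Phi Econn).

Variable k : nat.

Definition mk (o : {ffun 'I_k -> V}) (x : V) : {ffun 'I_k.+1 -> V} :=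
  [ffun i => if unlift ord_max i is Some j then o j else x].

Lemma mk_max (o : {ffun 'I_k -> V}) x : mk o x ord_max = x.
Proof. by rewrite ffunE unlift_none. Qed.

Lemma mk_lift (o : {ffun 'I_k -> V}) x j : mk o x (lift ord_max j) = o j.
Proof. by rewrite ffunE liftK. Qed.

Lemma mk_move (o o' : {ffun 'I_k -> V}) x x' : (forall j, step E (o j) (o' j)) -> step E x x' ->
  cops_move E (mk o x) (mk o' x').
Proof.
by move=> Ho Hx i; rewrite !ffunE; case: unliftP => [j _|_].
Qed.

Lemma mk_cap_x (o : {ffun 'I_k -> V}) x r : x = r -> captured (mk o x) r.
Proof. by move=> <-; exists ord_max; rewrite mk_max. Qed.

Lemma mk_cap_o (o : {ffun 'I_k -> V}) x r j : o j = r -> captured (mk o x) r.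
Proof. by move=> <-; exists (lift ord_max j); rewrite mk_lift. Qed.

Lemma round n (o : {ffun 'I_k -> V}) x r q (o' : {ffun 'I_k -> V}) :
  step E q r ->
  (forall j, step E (o j) (o' j)) ->
  Phi x r q <= n ->
  (forall (o : {ffun 'I_k -> V}) x r q, step E q r -> Phi x r q < n -> cw E (mk o x) r) ->
  (forall x' r', step E r r' -> r' != r -> r' != q ->
     ~ captured (mk o' x') r -> Phi x' r' r <= n -> cw E (mk o' x') r') ->
  cw E (mk o x) r.
Proof.
move=> Hqr Ho HPhi IH K.
case: (eqVneq x r) => Hxr; first by apply: cw_cap; exact: mk_cap_x.
have [x' [Hx' [Hd' HA]]] := chaser Econn Hqr Hxr.
apply: (@cw_step _ _ _ _ _ (mk o' x')); first exact: mk_move.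
have [Hc|Hnc] := pselect (captured (mk o' x') r); first by left.
right => r' Hr'.
have Hx'r : x' != r by apply/negP => /eqP Hx'r; apply: Hnc; exact: mk_cap_x.
have Hpos : 0 < dist x' r.
  by rewrite lt0n; apply/negP => /eqP /dist0_eq /eqP; rewrite (negPf Hx'r).
have [Hle Hlt] := Phi_dec Hd' Hpos HA Hr'.
case: (eqVneq r' r) => Hr1.
  by apply: IH Hr' _; apply: leq_trans (Hlt (or_introl Hr1)) HPhi.
case: (eqVneq r' q) => Hr2.
  by apply: IH Hr' _; apply: leq_trans (Hlt (or_intror Hr2)) HPhi.
apply: K => //; exact: leq_trans Hle HPhi.
Qed.


Definition posf (cG cG' : {ffun 'I_k -> T}) m : {ffun 'I_k -> V} :=
  [ffun j => pos (cG j) (cG' j) m].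
Definition emb (cG : {ffun 'I_k -> T}) : {ffun 'I_k -> V} := [ffun j => vinl (cG j)].

Lemma stepE_ne u v : step E u v -> v != u -> E u v.
Proof. by rewrite /step eq_sym => /orP [/eqP ->|//]; rewrite eqxx. Qed.

Lemma pos_stepP x y m : step e x y -> 0 < m <= d -> step E (pos x y m.-1) (pos x y m).
Proof.
move=> Hs Hm; have := pos_step esym Hs (_ : m.-1 < d); rewrite prednK; last by lia.
by apply; lia.
Qed.

Lemma sum_pred_lt (I : finType) (f : I -> nat) :
  0 < \sum_i f i -> \sum_i (f i).-1 < \sum_i f i.
Proof.
move=> Hs.
have [j Hj] : exists j, 0 < f j.
  apply/existsP; apply: contraLR Hs; rewrite negb_exists => /forallP H.
  rewrite -leqNgt leqn0 sum_nat_eq0; apply/forallP => i; have := H i.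
  by rewrite lt0n negbK.
rewrite (bigD1 j) //= [X in _ < X](bigD1 j) //=.
have : \sum_(i | i != j) (f i).-1 <= \sum_(i | i != j) f i.
  by apply: leq_sum => i _; exact: leq_pred.
lia.
Qed.

Lemma sum0_each (I : finType) (f : I -> nat) j : \sum_i f i = 0 -> f j = 0.
Proof.
move/eqP; rewrite sum_nat_eq0 => /forallP /(_ j) /implyP H.
by apply/eqP; apply: H.
Qed.

Section Phases.
Variable n : nat.
Hypothesis IHn : forall (o : {ffun 'I_k -> V}) x r q, step E q r -> Phi x r q < n -> cw E (mk o x) r.

Lemma window (cG cG' : {ffun 'I_k -> T}) s N :
  (forall j, step e (cG j) (cG' j)) ->
  (captured cG' N \/ (forall N', e N N' -> forall x,
      Phi x (pos N N' 1) (pos N N' 0) <= n -> cw E (mk (emb cG') x) (pos N N' 1))) ->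
  e s N -> forall m, 0 < m <= d -> forall x,
  Phi x (pos s N m) (pos s N m.-1) <= n -> cw E (mk (posf cG cG' m.-1) x) (pos s N m).
Proof.
move=> Hmv Hend HsN; have HsN' : step e s N by rewrite /step HsN orbT.
move=> m; move Hj: (d - m) => j; elim: j m Hj => [|j IH] m Hj Hm x HPhi.
  have Hmd : m = d by lia.
  apply: (round (o' := posf cG cG' m)) HPhi IHn _ => //.
  - exact: pos_stepP.
  - by move=> i; rewrite !ffunE; exact: pos_stepP.
  move=> x' r' Hr' Hne1 Hne2 Hnc HPhi'.
  have Hr : pos s N m = vinl N by rewrite posd //; lia.
  have Ho' : posf cG cG' m = emb cG'.
    by apply/ffunP => i; rewrite !ffunE posd //; lia.
  rewrite Ho' in Hnc *.
  case: Hend => [[i Hi]|Hall].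
    by exfalso; apply: Hnc; apply: (@mk_cap_o _ _ _ i); rewrite ffunE Hi Hr.
  move: Hr' Hne1 HPhi'; rewrite Hr => Hr' Hne1 HPhi'.
  have [z [Hz Hr'z]] := inl_nbr esym eirr (stepE_ne Hr' Hne1).
  subst r'; apply: Hall => //.
  by move: HPhi'; rewrite (pos0 d' esym) // /step Hz orbT.
apply: (round (o' := posf cG cG' m)) HPhi IHn _ => //.
- exact: pos_stepP.
- by move=> i; rewrite !ffunE; exact: pos_stepP.
move=> x' r' Hr' Hne1 Hne2 Hnc HPhi'.
have Hm' : 0 < m < d by lia.
case: (pos_nbr esym eirr HsN Hm' (stepE_ne Hr' Hne1)) => Hr'e.
  by move: Hne2; rewrite Hr'e eqxx.
subst r'; have := IH m.+1 ltac:(lia) ltac:(lia) x' HPhi'.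
by [].
Qed.


Lemma sim_phase (cG : {ffun 'I_k -> T}) N : cw e cG N -> forall s x, e s N ->
  Phi x (pos s N 1) (pos s N 0) <= n -> cw E (mk (emb cG) x) (pos s N 1).
Proof.
move=> H; elim/cw_ind2: H => {cG N}.
  move=> cG N Hcap s x HsN HPhi.
  have Hmv : forall j, step e (cG j) (cG j) by move=> j; rewrite /step eqxx.
  have := window Hmv (or_introl Hcap) HsN (m := 1) isT HPhi.
  suff -> : posf cG cG 0 = emb cG by [].
  by apply/ffunP => j; rewrite !ffunE pos0.
move=> cG N cG' Hmv Hor s x HsN HPhi.
have Hend : captured cG' N \/ (forall N', e N N' -> forall x,
      Phi x (pos N N' 1) (pos N N' 0) <= n -> cw E (mk (emb cG') x) (pos N N' 1)).
  case: Hor => [Hc|Hall]; [by left|right].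
  move=> N' HNN' x' HPhi'.
  have HsNN : step e N N' by rewrite /step HNN' orbT.
  have [_ P] := Hall N' HsNN.
  exact: P N x' HNN' HPhi'.
have := window Hmv Hend HsN (m := 1) isT HPhi.
suff -> : posf cG cG' 0 = emb cG by [].
by apply/ffunP => j; rewrite !ffunE pos0.
Qed.

Variable c0 : {ffun 'I_k -> T}.
Hypothesis Hc0 : forall r, cw e c0 r.

Lemma wait_phase a b : e a b -> forall m, 0 < m <= d -> forall x,
  Phi x (pos a b m) (pos a b m.-1) <= n -> cw E (mk (emb c0) x) (pos a b m).
Proof.
move=> Hab; have Hs : step e a b by rewrite /step Hab orbT.
move=> m; move Hj: (d - m) => j; elim: j m Hj => [|j IH] m Hj Hm x HPhi;
  (case: (eqVneq m 1) => Hm1; first by subst m; exact: sim_phase).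
  have Hmd : m = d by lia.
  apply: (round (o' := emb c0)) HPhi IHn _ => //.
  - exact: pos_stepP.
  - by move=> i; rewrite /step eqxx.
  move=> x' r' Hr' Hne1 Hne2 Hnc HPhi'.
  have Hr : pos a b m = vinl b by rewrite posd //; lia.
  move: Hr' Hne1 HPhi'; rewrite Hr => Hr' Hne1 HPhi'.
  have [z [Hz Hr'z]] := inl_nbr esym eirr (stepE_ne Hr' Hne1).
  subst r'; apply: sim_phase => //.
  by move: HPhi'; rewrite (pos0 d' esym) // /step Hz orbT.
apply: (round (o' := emb c0)) HPhi IHn _ => //.
- exact: pos_stepP.
- by move=> i; rewrite /step eqxx.
move=> x' r' Hr' Hne1 Hne2 Hnc HPhi'.
have Hm' : 0 < m < d by lia.
case: (pos_nbr esym eirr Hab Hm' (stepE_ne Hr' Hne1)) => Hr'e.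
  by move: Hne2; rewrite Hr'e eqxx.
subst r'; exact: IH m.+1 ltac:(lia) ltac:(lia) x' HPhi'.
Qed.

Lemma wait_entry x r q : step E q r -> Phi x r q <= n -> cw E (mk (emb c0) x) r.
Proof.
move=> Hqr HPhi; case: (eqVneq q r) => Hqr'; last first.
  have [a [b [m [Hab [Hm [Hq Hr]]]]]] := edge esym eirr Hqr Hqr'.
  by subst q r; exact: wait_phase.
apply: (round (o' := emb c0)) HPhi IHn _ => //.
  by move=> i; rewrite /step eqxx.
move=> x' r' Hr' Hne1 Hne2 Hnc HPhi'.
have Hrr : r != r' by rewrite eq_sym.
have [a [b [m [Hab [Hm [Hq Hr]]]]]] := edge esym eirr Hr' Hrr.
subst r'; rewrite Hq in HPhi'.
exact: wait_phase.
Qed.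

Lemma travel M (o : {ffun 'I_k -> V}) x r q :
  \sum_j dist (o j) (vinl (c0 j)) <= M -> step E q r -> Phi x r q <= n ->
  cw E (mk o x) r.
Proof.
elim: M o x r q => [|M IH] o x r q HM Hqr HPhi.
  have Hs0 : \sum_j dist (o j) (vinl (c0 j)) = 0 by lia.
  have -> : o = emb c0.
    apply/ffunP => j; rewrite ffunE; apply: (dist0_eq (conn := Econn)).
    by apply: sum0_each Hs0.
  exact: (wait_entry Hqr HPhi).
case: (posnP (\sum_j dist (o j) (vinl (c0 j)))) => Hs0.
  have -> : o = emb c0.
    apply/ffunP => j; rewrite ffunE; apply: (dist0_eq (conn := Econn)).
    by apply: sum0_each Hs0.
  exact: (wait_entry Hqr HPhi).
have Hgeo : forall j, exists y, step E (o j) y &&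
    (dist y (vinl (c0 j)) == (dist (o j) (vinl (c0 j))).-1).
  move=> j; have [y [H1 H2]] := dist_geo Econn (o j) (vinl (c0 j)).
  by exists y; rewrite H1 H2 eqxx.
pose o' := [ffun j => xchoose (Hgeo j)].
have Ho' : forall j, step E (o j) (o' j) /\
    dist (o' j) (vinl (c0 j)) = (dist (o j) (vinl (c0 j))).-1.
  by move=> j; rewrite ffunE; case/andP: (xchooseP (Hgeo j)) => H1 /eqP H2.
apply: (round (o' := o')) HPhi IHn _ => //.
  by move=> j; case: (Ho' j).
move=> x' r' Hr' Hne1 Hne2 Hnc HPhi'.
apply: IH Hr' HPhi'.
have Hlt := sum_pred_lt Hs0.
have -> : \sum_j dist (o' j) (vinl (c0 j)) = \sum_j (dist (o j) (vinl (c0 j))).-1.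
  by apply: eq_bigr => j _; case: (Ho' j).
by move: Hlt HM; lia.
Qed.

End Phases.


Lemma main (c0 : {ffun 'I_k -> T}) (Hc0 : forall r, cw e c0 r) n :
  forall (o : {ffun 'I_k -> V}) x r q, step E q r -> Phi x r q <= n -> cw E (mk o x) r.
Proof.
elim/ltn_ind: n => n IH o x r q Hqr HPhi.
have IHn : forall (o : {ffun 'I_k -> V}) x r q, step E q r -> Phi x r q < n -> cw E (mk o x) r.
  by move=> o1 x1 r1 q1 H1 H2; apply: (IH _ H2) H1 (leqnn _).
exact: (travel IHn Hc0 (leqnn _) Hqr HPhi).
Qed.

Lemma UB_win (t0 : T) : cop_win e k -> cop_win E k.+1.
Proof.
case=> c0 Hc0; exists (mk (emb c0) (vinl t0)) => r0.
have Hs : step E r0 r0 by rewrite /step eqxx.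
exact: (main Hc0 (emb c0) (x := vinl t0) Hs (leqnn _)).
Qed.

End UB.



Theorem lemma17 (T : finType) (e : rel T) (d : nat) :
  simple_graph e -> connected_graph e -> (1 <= d)%N ->
  (cop_number e <= cop_number (@subdiv_rel T e d) <= (cop_number e).+1)%N.
Proof.
case=> esym eirr Gc; case: d => [//|d'] _.
apply/andP; split.
  have Hw := cn_win (@subdiv_rel T e d'.+1).
  have Hg := LB_win esym eirr Hw.
  case: (leqP (cop_number (@subdiv_rel T e d'.+1)) #|T|) => H.
    exact: cn_le Hg H.
  exact: leq_trans (cn_card e) (ltnW H).
have Hc := cn_card (@subdiv_rel T e d'.+1).
move: Hc; set N := #|_| => Hc.
case: (pickP (@predT T)) => [t0 _|Hempty].
  have Hw := cn_win e.
  have Hu := UB_win d' esym eirr Gc t0 Hw.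
  case: (leqP (cop_number e).+1 N) => H.
    exact: cn_le Hu H.
  exact: leq_trans Hc (ltnW H).
have H0 : N = 0.
  apply: eq_card0 => v; case: (vert_cases esym eirr v) => [[x _]|[a _]].
    by have := Hempty x.
  by have := Hempty a.
by apply: leq_trans Hc _; rewrite H0.
Qed.
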